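(* Let $\theta_1>0$, let $n,d$ be positive integers, let $\epsilon\in(0,\frac12)$, and define for real $\lambda\ge2$ $$M(\lambda)=\theta_1\,\lambda\log_2(\lambda)\,\left(\log_2(3n2^d/\epsilon)\right)^{\frac{1}{\lambda-1}+1}.$$ Then $M$ has exactly one local minimum on $[2,\infty)$, and it is the global minimum of $M$ on $[2,\infty)$. *)

(* Defs.v *)
From Stdlib Require Export Reals.
Open Scope R_scope.

Definition log2 (x : R) : R := ln x / ln 2.

(* M(lambda) = theta1 * lambda * log2(lambda) * (log2(3 n 2^d / eps))^(1/(lambda-1) + 1).
   The base log2(3 n 2^d / eps) is > 1 under the hypotheses, so Rpower is the
   usual real power. *)
Definition M_fun (theta1 : R) (n d : nat) (eps : R) (lam : R) : R :=
  theta1 * lam * log2 lam *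
  Rpower (log2 (3 * INR n * 2 ^ d / eps)) (1 / (lam - 1) + 1).

Definition is_local_min_on (D : R -> Prop) (f : R -> R) (x : R) : Prop :=
  D x /\ exists delta : R, delta > 0 /\
    forall y : R, D y -> Rabs (y - x) < delta -> f x <= f y.

Definition from2 (x : R) : Prop := 2 <= x.

(* Main.v *)
Require Import Defs.
From Stdlib Require Import Reals Lra.
From Coquelicot Require Import Coquelicot.
Open Scope R_scope.

Definition Ff (L t : R) := t * ln t * exp (L / (t - 1)).
Definition Fd (L t : R) := exp (L / (t - 1)) * ((ln t + 1) * (t - 1)^2 - L * t * ln t) / (t - 1)^2.
Definition qf (t : R) := (t - 1)^2 / (t * ln t).
Definition qd (t : R) := (t - 1) * ((t + 1) * ln t - (t - 1)) / (t * ln t)^2.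
Definition hf (t : R) := (t - 1)^2 / t + qf t.

Lemma ln_pos_gt1 t : 1 < t -> 0 < ln t.
Proof. intros; rewrite <- ln_1; apply ln_increasing; lra. Qed.

Lemma Ff_der L t : 1 < t -> is_derive (Ff L) t (Fd L t).
Proof.
  intros Ht. unfold Ff, Fd. auto_derive.
  - repeat split; lra.
  - replace (t + - (1)) with (t - 1) by ring. unfold Rdiv. set (E := exp _). field. lra.
Qed.

Lemma qf_der t : 1 < t -> is_derive qf t (qd t).
Proof.
  intros Ht. pose proof (ln_pos_gt1 t Ht) as Hl. unfold qf, qd. auto_derive.
  - repeat split; try lra. apply Rgt_not_eq. apply Rmult_lt_0_compat; lra.
  - field. split; lra.
Qed.

Lemma ln_lb t : 0 < t -> 1 - / t <= ln t.
Proof.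
  intros Ht. pose proof (exp_ineq1_le (- ln t)) as H.
  rewrite exp_Ropp, exp_ln in H by lra. lra.
Qed.

Lemma qd_pos t : 1 < t -> 0 < qd t.
Proof.
  intros Ht. pose proof (ln_pos_gt1 t Ht) as Hl. pose proof (ln_lb t ltac:(lra)) as Hb.
  unfold qd. unfold Rdiv. apply Rmult_lt_0_compat.
  - apply Rmult_lt_0_compat; [lra|].
    assert (Hi : (t + 1) * (1 - / t) - (t - 1) = (t - 1) / t) by (field; lra).
    assert (0 < (t - 1) / t) by (apply Rdiv_lt_0_compat; lra).
    assert ((t+1) * (1 - / t) <= (t+1) * ln t) by (apply Rmult_le_compat_l; lra).
    lra.
  - apply Rinv_0_lt_compat. apply pow_lt. apply Rmult_lt_0_compat; lra.
Qed.

Lemma qf_incr u v : 1 < u -> u < v -> qf u < qf v.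
Proof.
  intros Hu Huv.
  apply (incr_function qf (Finite 1) p_infty qd); simpl; auto.
  - intros x Hx _. apply qf_der; auto.
  - intros x Hx _. apply qd_pos; auto.
Qed.

Lemma div_lt_aux a b u v : 0 < u -> 0 < v -> a * v < b * u -> a / u < b / v.
Proof.
  intros Hu Hv H.
  replace (a / u) with ((a * v) * / (u * v)) by (field; lra).
  replace (b / v) with ((b * u) * / (u * v)) by (field; lra).
  apply Rmult_lt_compat_r; auto. apply Rinv_0_lt_compat; nra.
Qed.

Lemma hf_incr u v : 1 < u -> u < v -> hf u < hf v.
Proof.
  intros Hu Huv. unfold hf.
  pose proof (qf_incr u v Hu Huv).
  assert ((u - 1)^2 / u < (v - 1)^2 / v).
  { apply div_lt_aux; try lra.
    assert (0 < (v - u) * (u * v - 1)) by (apply Rmult_lt_0_compat; nra).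
    replace ((v - 1) ^ 2 * u) with ((u - 1) ^ 2 * v + (v - u) * (u * v - 1)) by ring.
    lra. }
  lra.
Qed.

Lemma hf_cont t : 1 < t -> continuity_pt hf t.
Proof.
  intros Ht. pose proof (ln_pos_gt1 t Ht) as Hl.
  assert (Hd : ex_derive hf t).
  2:{ destruct Hd as [l Hd]. apply is_derive_Reals in Hd.
      apply derivable_continuous_pt. exact (exist _ l Hd). }
  unfold hf, qf. auto_derive. repeat split; try lra.
  apply Rgt_not_eq. apply Rmult_lt_0_compat; lra.
Qed.

Lemma hf_big t : 2 <= t -> t - 2 <= hf t.
Proof.
  intros Ht. pose proof (ln_pos_gt1 t ltac:(lra)) as Hl. unfold hf, qf.
  assert (0 <= (t - 1) ^ 2 / (t * ln t)).
  { apply Rle_mult_inv_pos. nra. apply Rmult_lt_0_compat; lra. }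
  assert ((t - 1)^2 / t = t - 2 + / t) by (field; lra).
  assert (0 < / t) by (apply Rinv_0_lt_compat; lra).
  lra.
Qed.

Lemma G_eq L t : 1 < t -> (ln t + 1) * (t - 1)^2 - L * t * ln t = t * ln t * (hf t - L).
Proof.
  intros Ht. pose proof (ln_pos_gt1 t Ht). unfold hf, qf. field. lra.
Qed.

Lemma sign_change L : exists x, 2 <= x /\ (forall t, 2 <= t < x -> hf t < L) /\
  (forall t, x < t -> L < hf t).
Proof.
  destruct (Rle_lt_dec L (hf 2)) as [H|H].
  - exists 2. split; [lra|split].
    + intros t Ht. lra.
    + intros t Ht. pose proof (hf_incr 2 t ltac:(lra) Ht). lra.
  - set (B := 3 + Rabs L).
    assert (HB : L < hf B).
    { pose proof (hf_big B ltac:(unfold B; pose proof (Rabs_pos L); lra)).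
      pose proof (Rle_abs L). unfold B in *. lra. }
    destruct (Ranalysis5.IVT_interv (fun t => hf t - L) 2 B) as [z [Hz1 Hz2]].
    + intros a Ha. apply continuity_pt_minus. apply hf_cont. lra.
      apply continuity_pt_const. intros ? ?; reflexivity.
    + unfold B. pose proof (Rabs_pos L). lra.
    + lra.
    + lra.
    + exists z. split; [lra|split].
      * intros t Ht. pose proof (hf_incr t z ltac:(lra) ltac:(lra)). lra.
      * intros t Ht. pose proof (hf_incr z t ltac:(lra) ltac:(lra)). lra.
Qed.

Lemma Fd_sign L t : 1 < t -> (hf t < L -> Fd L t < 0) /\ (L < hf t -> 0 < Fd L t).
Proof.
  intros Ht. pose proof (ln_pos_gt1 t Ht) as Hl. unfold Fd. rewrite (G_eq L t Ht).
  pose proof (exp_pos (L / (t - 1))) as He.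
  assert (Hd : 0 < (t - 1)^2) by (apply pow_lt; lra).
  assert (Htl : 0 < t * ln t) by (apply Rmult_lt_0_compat; lra).
  split; intros H.
  - unfold Rdiv. assert (0 < / (t-1)^2) by (apply Rinv_0_lt_compat; lra).
    assert (0 < t * ln t * (L - hf t)) by (apply Rmult_lt_0_compat; lra).
    assert (0 < exp (L / (t - 1)) * (t * ln t * (L - hf t)) * / (t - 1) ^ 2)
      by (repeat apply Rmult_lt_0_compat; lra).
    replace (t * ln t * (hf t - L)) with (- (t * ln t * (L - hf t))) by ring. lra.
  - unfold Rdiv. assert (0 < / (t-1)^2) by (apply Rinv_0_lt_compat; lra).
    assert (0 < t * ln t * (hf t - L)) by (apply Rmult_lt_0_compat; lra).
    repeat apply Rmult_lt_0_compat; lra.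
Qed.

Lemma F_decr L x : (forall t, 2 <= t < x -> hf t < L) ->
  forall u v, 2 <= u -> u < v -> v <= x -> Ff L v < Ff L u.
Proof.
  intros Hs u v Hu Huv Hv.
  destruct (MVT_cor2 (Ff L) (Fd L) u v Huv) as [c [Hc1 Hc2]].
  - intros c Hc. apply is_derive_Reals. apply Ff_der. lra.
  - assert (Fd L c < 0) by (apply (Fd_sign L c ltac:(lra)); apply Hs; lra).
    assert (Fd L c * (v - u) < 0) by nra. lra.
Qed.

Lemma F_incr L x : (forall t, x < t -> L < hf t) -> 2 <= x ->
  forall u v, x <= u -> u < v -> Ff L u < Ff L v.
Proof.
  intros Hs Hx u v Hu Huv.
  destruct (MVT_cor2 (Ff L) (Fd L) u v Huv) as [c [Hc1 Hc2]].
  - intros c Hc. apply is_derive_Reals. apply Ff_der. lra.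
  - assert (0 < Fd L c) by (apply (Fd_sign L c ltac:(lra)); apply Hs; lra).
    assert (0 < Fd L c * (v - u)) by nra. lra.
Qed.

Lemma M_eq theta1 n d eps t : 1 < t ->
  M_fun theta1 n d eps t =
  (theta1 * exp (ln (log2 (3 * INR n * 2 ^ d / eps))) / ln 2) *
  Ff (ln (log2 (3 * INR n * 2 ^ d / eps))) t.
Proof.
  intros Ht. unfold M_fun, Rpower, Ff.
  set (L := ln (log2 (3 * INR n * 2 ^ d / eps))).
  replace ((1 / (t - 1) + 1) * L) with (L / (t - 1) + L) by (field; lra).
  rewrite exp_plus. unfold log2.
  assert (0 < ln 2) by (apply ln_pos_gt1; lra).
  field. lra.
Qed.

Theorem mainTheorem9 (theta1 : R) (n d : nat) (eps : R) :
  theta1 > 0 -> (0 < n)%nat -> (0 < d)%nat -> 0 < eps < 1 / 2 ->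
  exists x : R,
    is_local_min_on from2 (M_fun theta1 n d eps) x /\
    (forall y : R, is_local_min_on from2 (M_fun theta1 n d eps) y -> y = x) /\
    (forall y : R, from2 y -> M_fun theta1 n d eps x <= M_fun theta1 n d eps y).
Proof.
  intros Hth _ _ _.
  set (L := ln (log2 (3 * INR n * 2 ^ d / eps))).
  set (K := theta1 * exp L / ln 2).
  assert (HK : 0 < K).
  { unfold K. assert (0 < ln 2) by (apply ln_pos_gt1; lra).
    pose proof (exp_pos L). unfold Rdiv.
    repeat apply Rmult_lt_0_compat; try lra. apply Rinv_0_lt_compat; lra. }
  assert (HM : forall t, 2 <= t -> M_fun theta1 n d eps t = K * Ff L t).
  { intros t Ht. apply M_eq. lra. }
  destruct (sign_change L) as [x [Hx [Hlt Hgt]]].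
  pose proof (F_decr L x Hlt) as Dec.
  pose proof (F_incr L x Hgt Hx) as Inc.
  assert (Glob : forall y, 2 <= y -> M_fun theta1 n d eps x <= M_fun theta1 n d eps y).
  { intros y Hy. rewrite (HM x Hx), (HM y Hy). apply Rmult_le_compat_l; [lra|].
    destruct (Rtotal_order y x) as [H|[H|H]].
    - left. apply Dec; lra.
    - subst; lra.
    - left. apply Inc; lra. }
  exists x. split; [|split].
  - split; [exact Hx|]. exists 1. split; [lra|]. intros y Hy _. apply Glob. exact Hy.
  - intros y [Hy [delta [Hdel Hloc]]].
    unfold from2 in Hy.
    destruct (Rtotal_order y x) as [H|[H|H]]; [exfalso| exact H | exfalso].
    + set (z := Rmin (y + delta / 2) x).
      assert (Hz1 : y < z) by (unfold z; apply Rmin_glb_lt; lra).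
      assert (Hz2 : z <= y + delta / 2) by (unfold z; apply Rmin_l).
      assert (Hz3 : z <= x) by (unfold z; apply Rmin_r).
      assert (Hle := Hloc z ltac:(unfold from2; lra) ltac:(rewrite Rabs_right; lra)).
      rewrite (HM y Hy), (HM z ltac:(lra)) in Hle.
      pose proof (Dec y z Hy Hz1 Hz3). nra.
    + set (z := Rmax (y - delta / 2) x).
      assert (Hz1 : z < y) by (unfold z; apply Rmax_lub_lt; lra).
      assert (Hz2 : y - delta / 2 <= z) by (unfold z; apply Rmax_l).
      assert (Hz3 : x <= z) by (unfold z; apply Rmax_r).
      assert (Hle := Hloc z ltac:(unfold from2; lra) ltac:(rewrite Rabs_left; lra)).
      rewrite (HM y Hy), (HM z ltac:(lra)) in Hle.
      pose proof (Inc z y Hz3 Hz1). nra.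
  - intros y Hy. apply Glob. exact Hy.
Qed.
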